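(* Let $m,n$ be positive integers with $n\le m$. Suppose there is a scheme that encodes every set $S\subseteq[m]$ with $|S|\leq n$ as a bit string $\phi(S)\in\{0,1\}^s$, together with an exact quantum bit-probe query algorithm that, for every such $S$ and every $i\in[m]$, given query $i$ and oracle access to $\phi(S)$, outputs with certainty whether $i\in S$, making only one bit-probe. Then $s\geq m$.
   Context: $[m]=\{0,\dots,m-1\}$. Quantum bit-probe model: the algorithm operates on a Hilbert space $\mathcal H_L\otimes\mathcal H_B\otimes\mathcal H_Z$, where $\mathcal H_L$ holds $\lceil\log_2 s\rceil$ address qubits, $\mathcal H_B$ is one data qubit and $\mathcal H_Z$ is an arbitrary workspace. For an input string $x\in\{0,1\}^s$ the oracle $O_x$ acts on basis states by $|l\rangle|b\rangle|z\rangle\mapsto|l\rangle|b\oplus x_l\rangle|z\rangle$. An algorithm with $t$ probes is a sequence of input-independent unitaries $U_0,\dots,U_t$; on query $i$ it starts in a fixed basis state encoding $i$ (with all other qubits $|0\rangle$), applies $U_tO_xU_{t-1}O_x\cdots U_1O_xU_0$, and outputs the result of measuring designated output qubits in the computational basis. It is exact if the output is correct with probability 1 for every input and query. *)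

(* Defs.v *)
From HB Require Import structures.
From mathcomp Require Import all_boot all_order all_algebra.
Set Implicit Arguments. Unset Strict Implicit. Unset Printing Implicit Defensive.
Import Order.TTheory GRing.Theory Num.Theory.
Local Open Scope ring_scope.

(* Computational basis of H_L (x) H_B (x) H_Z with a address qubits,
   one data qubit and w workspace qubits. *)
Definition qbasis (a w : nat) : finType := ('I_(2 ^ a) * bool * 'I_(2 ^ w))%type.

Definition naddr (s : nat) : nat := up_log 2 s.

(* Operators on the space, given by their matrix entries U y x = <y|U|x>. *)
Definition qop (C : numClosedFieldType) (a w : nat) := qbasis a w -> qbasis a w -> C.
Definition qstate (C : numClosedFieldType) (a w : nat) := qbasis a w -> C.

Definition unitary (C : numClosedFieldType) (a w : nat) (U : qop C a w) : Prop :=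
  (forall x x' : qbasis a w,
     \sum_(y : qbasis a w) (U y x)^* * U y x' = (x == x')%:R) /\
  (forall y y' : qbasis a w,
     \sum_(x : qbasis a w) U y x * (U y' x)^* = (y == y')%:R).

Definition apply_op (C : numClosedFieldType) (a w : nat) (U : qop C a w)
  (v : qstate C a w) : qstate C a w := fun y => \sum_(x : qbasis a w) U y x * v x.

Definition ket (C : numClosedFieldType) (a w : nat) (b : qbasis a w) : qstate C a w :=
  fun y => (y == b)%:R.

(* Bit x_l of the input string; addresses l >= s (which exist when s is not a
   power of two) are read as 0, i.e. the oracle acts as the identity there. *)
Definition xbit (s : nat) (x : {ffun 'I_s -> bool}) (a : nat) (l : 'I_(2 ^ a)) : bool :=
  match @insub nat (fun k => k < s)%N _ (val l) with
  | Some j => x j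
  | None => false
  end.

Definition oracle_basis (s : nat) (x : {ffun 'I_s -> bool}) (w : nat)
  (y : qbasis (naddr s) w) : qbasis (naddr s) w :=
  let: (l, b, z) := y in (l, xorb b (xbit x l), z).

Definition apply_oracle (C : numClosedFieldType) (s : nat) (x : {ffun 'I_s -> bool})
  (w : nat) (v : qstate C (naddr s) w) : qstate C (naddr s) w :=
  fun y => v (oracle_basis x y).

Definition final_state (C : numClosedFieldType) (s : nat) (x : {ffun 'I_s -> bool})
  (w : nat) (U0 U1 : qop C (naddr s) w) (b0 : qbasis (naddr s) w) :
  qstate C (naddr s) w :=
  apply_op U1 (apply_oracle x (apply_op U0 (ket C b0))).

(* Probability that measuring in the computational basis and applying the
   output map [out] (reading the designated output qubits) yields [ans]. *)
Definition prob_output (C : numClosedFieldType) (a w : nat) (psi : qstate C a w)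
  (out : qbasis a w -> bool) (ans : bool) : C :=
  \sum_(y : qbasis a w | out y == ans) `|psi y| ^+ 2.

(* Main.v *)
Require Import Defs.
From HB Require Import structures.
From mathcomp Require Import all_boot all_order all_algebra.
From mathcomp Require Import ring.
Import Order.TTheory GRing.Theory Num.Theory.
Set Implicit Arguments. Unset Strict Implicit.
Local Open Scope ring_scope.

Definition affine (C : numClosedFieldType) (s : nat) (f : {ffun 'I_s -> bool} -> C) :=
  {p : C * ('I_s -> C) | forall x, f x = p.1 + \sum_k (x k)%:R * p.2 k}.

Lemma affine_const (C : numClosedFieldType) (s : nat) (c : C) : affine (fun _ : {ffun 'I_s -> bool} => c).
Proof. exists (c, fun _ => 0) => x /=; by rewrite big1 ?addr0 // => k _; rewrite mulr0. Qed.

Lemma affine_add (C : numClosedFieldType) (s : nat) (f g : {ffun 'I_s -> bool} -> C) :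
  affine f -> affine g -> affine (fun x => f x + g x).
Proof.
case=> [[c a] Ha] [[d b] Hb]; exists (c + d, fun k => a k + b k) => x /=.
rewrite Ha Hb /=.
have ->: \sum_k (x k)%:R * (a k + b k) = \sum_k (x k)%:R * a k + \sum_k (x k)%:R * b k.
  by rewrite -big_split; apply: eq_bigr => k _; rewrite mulrDr.
ring.
Qed.

Lemma affine_scale (C : numClosedFieldType) (s : nat) (f : {ffun 'I_s -> bool} -> C) (u : C) :
  affine f -> affine (fun x => u * f x).
Proof.
case=> [[c a] Ha]; exists (u * c, fun k => u * a k) => x /=.
rewrite Ha /= mulrDr mulr_sumr; congr (_ + _); apply: eq_bigr => k _; ring.
Qed.

Lemma affine_sum (C : numClosedFieldType) (s : nat) (I : Type) (r : seq I) (P : pred I)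
   (F : I -> {ffun 'I_s -> bool} -> C) :
  (forall i, affine (F i)) -> affine (fun x => \sum_(i <- r | P i) F i x).
Proof.
move=> HF; elim: r => [|i r IH].
  have [p Hp] := affine_const s (0:C); exists p => x; by rewrite big_nil -Hp.
case: (boolP (P i)) => Pi.
  have [p Hp] := affine_add (HF i) IH; exists p => x; by rewrite big_cons Pi -Hp.
case: IH => p Hp; exists p => x; by rewrite big_cons (negbTE Pi) -Hp.
Defined.

Lemma affine_bit (C : numClosedFieldType) (s : nat) (k : 'I_s) (c d : C) :
  affine (fun x : {ffun 'I_s -> bool} => if x k then d else c).
Proof.
exists (c, fun k' => (k' == k)%:R * (d - c)) => x /=.
rewrite (bigD1 k) //= big1 ?addr0; last first.
  by move=> k' /negbTE ->; rewrite mulr0n mul0r mulr0.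
by rewrite eqxx; case: (x k); rewrite /= ?mul1r ?mul0r ?addr0 //; ring.
Qed.

Lemma affine_orc (C : numClosedFieldType) (s w : nat) (v : qstate C (naddr s) w) y :
  affine (fun x => v (oracle_basis x y)).
Proof.
case: y => [[l b] z] /=; rewrite /xbit.
case: insubP => [k _ _ | _].
  have [p Hp] := affine_bit k (v (l, b, z)) (v (l, ~~ b, z)).
  exists p => x; rewrite -Hp; by case: (x k); case: b in Hp *.
have [p Hp] := affine_const s (v (l, b, z)); exists p => x; by rewrite -Hp; case: b in Hp *.
Qed.

Lemma affine_F (C : numClosedFieldType) (s w : nat) (U0 U1 : qop C (naddr s) w) b0 t :
  affine (fun x => final_state x U0 U1 b0 t).
Proof.
rewrite /final_state /apply_op /apply_oracle.
apply: (@affine_sum C s _ _ predT (fun y x => U1 t y * apply_op U0 (ket C b0) (oracle_basis x y))) => y.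
apply: affine_scale; exact: affine_orc.
Defined.

Lemma norm_apply (C : numClosedFieldType) (a w : nat) (U : qop C a w) (v : qstate C a w) :
  unitary U -> \sum_t `|apply_op U v t| ^+ 2 = \sum_t `|v t| ^+ 2.
Proof.
case=> HU _.
transitivity (\sum_t \sum_x' \sum_x ((v x')^* * v x) * ((U t x')^* * U t x)).
  apply: eq_bigr => t _; rewrite normCKC /apply_op rmorph_sum mulr_suml.
  apply: eq_bigr => x' _; rewrite mulr_sumr; apply: eq_bigr => x _.
  rewrite rmorphM /=; ring.
rewrite exchange_big; apply: eq_bigr => x' _ /=.
transitivity (\sum_x (v x')^* * v x * (x' == x)%:R).
  rewrite exchange_big; apply: eq_bigr => x _ /=; by rewrite -mulr_sumr HU.
rewrite (bigD1 x') //= big1; first by rewrite eqxx mulr1 addr0 normCKC.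
by move=> x Hx; rewrite eq_sym (negbTE Hx) mulr0.
Qed.

Lemma norm_oracle (C : numClosedFieldType) (s w : nat) x (v : qstate C (naddr s) w) :
  \sum_t `|apply_oracle x v t| ^+ 2 = \sum_t `|v t| ^+ 2.
Proof.
have K : involutive (@oracle_basis s x w).
  by case=> [[l b] z] /=; case: b; case: (xbit x l).
rewrite [RHS](reindex_inj (inv_inj K)) //.
Qed.

Lemma norm_ket (C : numClosedFieldType) (a w : nat) b :
  \sum_t `|@ket C a w b t| ^+ 2 = 1 :> C.
Proof.
rewrite (bigD1 b) //= big1 ?addr0; first by rewrite /ket eqxx normr1 expr1n.
by move=> t /negbTE Ht; rewrite /ket Ht normr0 expr0n.
Qed.

Lemma norm_final (C : numClosedFieldType) (s w : nat) x (U0 U1 : qop C (naddr s) w) b0 :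
  unitary U0 -> unitary U1 -> \sum_t `|final_state x U0 U1 b0 t| ^+ 2 = 1.
Proof.
move=> H0 H1; rewrite /final_state norm_apply // norm_oracle norm_apply //; exact: norm_ket.
Qed.

Lemma zero_true (C : numClosedFieldType) (a w : nat) (psi : qstate C a w) out :
  \sum_t `|psi t| ^+ 2 = 1 -> prob_output psi out false = 1 ->
  forall t, out t -> psi t = 0.
Proof.
move=> Hn Hp.
have HS : \sum_(t | out t == true) `|psi t| ^+ 2 = 0.
  move: Hn; rewrite (bigID (fun t => out t == true)) /=.
  have -> : \sum_(i | ~~ (out i == true)) `|psi i| ^+ 2 = prob_output psi out false.
    by apply: eq_bigl => t; case: (out t).
  by rewrite Hp => E; apply: (@addIr _ 1); rewrite E add0r.
move=> t Ht.
have Hpos : forall i, out i == true -> 0 <= `|psi i| ^+ 2 by move=> i _; rewrite exprn_ge0.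
have : `|psi t| ^+ 2 == 0 by apply/eqP; apply: (psumr_eq0P Hpos HS); rewrite Ht.
by rewrite expf_eq0 /= normr_eq0 => /eqP.
Qed.

Theorem mainTheorem6 (C : numClosedFieldType) (m n s : nat) :
  (0 < n)%N -> (0 < m)%N -> (n <= m)%N ->
  forall (phi : {set 'I_m} -> {ffun 'I_s -> bool}) (w : nat)
         (init : 'I_m -> qbasis (naddr s) w)
         (U0 U1 : qop C (naddr s) w) (out : qbasis (naddr s) w -> bool),
  unitary U0 -> unitary U1 ->
  (forall (S : {set 'I_m}), (#|S| <= n)%N -> forall i : 'I_m,
     prob_output (final_state (phi S) U0 U1 (init i)) out (i \in S) = 1) ->
  (m <= s)%N.
Proof.
move=> Hn Hm Hnm phi w init U0 U1 out H0 H1 H.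
pose z := phi set0; pose X j := phi [set j].
pose psi x i := final_state x U0 U1 (init i).
pose G i x := \sum_(t | out t == true) (psi (X i) i t)^* * psi x i t.
have affG : forall i, affine (G i).
  move=> i; rewrite /G.
  apply: (@affine_sum C s _ _ (fun t => out t == true) (fun t x => (psi (X i) i t)^* * psi x i t)) => t.
  apply: affine_scale; exact: affine_F.
have G1 : forall i, G i (X i) = 1.
  move=> i; rewrite /G -(H [set i] _ i); last by rewrite cards1.
  rewrite set11 /prob_output; apply: eq_bigr => t _; by rewrite normCKC.
have G0 : forall i (S : {set 'I_m}), (#|S| <= n)%N -> i \notin S -> G i (phi S) = 0.
  move=> i S HS HiS; rewrite /G big1 // => t Ht.
  have := H S HS i; rewrite (negbTE HiS) => Hp.
  by rewrite /psi (zero_true (norm_final _ _ H0 H1) Hp) ?mulr0 //; apply/eqP.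
pose D := \matrix_(j < m, k < s) ((X j k)%:R - (z k)%:R : C).
pose A := \matrix_(k < s, i < m) (sval (affG i)).2 k.
have DA : D *m A = 1%:M.
  apply/matrixP => j i; rewrite !mxE.
  have E : \sum_k D j k * A k i = G i (X j) - G i z.
    rewrite (svalP (affG i)) (svalP (affG i)) opprD addrACA subrr add0r -sumrB.
    by apply: eq_bigr => k _; rewrite !mxE mulrBl.
  rewrite E (G0 i set0) ?cards0 ?in_set0 // subr0.
  case: (eqVneq j i) => [->|Hji]; first by rewrite G1.
  rewrite G0 ?cards1 // in_set1; by rewrite eq_sym.
have := mxrankM_maxl D A; rewrite DA mxrank1 => Hr.
exact: leq_trans Hr (rank_leq_col D).
Qed.
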